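(* Let $\mathcal{G}=(V,E)$ be a DAG and let $x,y\in V$ and $K\subseteq V$ be such that $K$ does not $d$-separate $x$ and $y$. Then there exists a path $p$ from $x$ to $y$ such that (i) no non-collider on $p$ is in $K$, (ii) for every collider $n_i$ on $p$ there exists a directed path $q_i$ from $n_i$ to some $k_i\in K$ (possibly of length zero, $n_i=k_i$), (iii) each $q_i$ intersects $p$ only at $n_i$, and (iv) the paths $q_i$ are pairwise node-disjoint.
   Context: A path in a DAG is a sequence of distinct nodes in which consecutive nodes are adjacent; a node $k$ on a path is a collider if the path has consecutive edges $u\to k\leftarrow w$, and a non-collider otherwise. A directed path is one all of whose edges point in the same direction along the path. $d$-separation: $K$ $d$-separates $x$ and $y$ if every path between them contains a non-collider in $K$ or a collider that is not in $K$ and has no descendant in $K$. *)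

(* Defs.v *)
From mathcomp Require Import all_boot.
Set Implicit Arguments. Unset Strict Implicit. Unset Printing Implicit Defensive.

Section DAG.
Variables (T : finType) (E : rel T).

Definition adj : rel T := fun u v => E u v || E v u.

Definition is_dag : Prop :=
  forall (x : T) (p : seq T), path E x p -> last x p = x -> p = [::].

Definition is_gpath (x : T) (p : seq T) (y : T) : bool :=
  [&& path adj x p, uniq (x :: p) & last x p == y].

Definition is_dpath (x : T) (q : seq T) : bool := path E x q && uniq (x :: q).

Definition collider (s : seq T) (k : T) : bool :=
  [exists i : 'I_(size s),
    [&& 0 < (i : nat), (i : nat).+1 < size s, nth k s i == k,
        E (nth k s (i : nat).-1) k & E (nth k s (i : nat).+1) k]].

Definition noncollider (s : seq T) (k : T) : bool := (k \in s) && ~~ collider s k.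

(* d-separation as in the paper; descendants include the node itself *)
Definition d_separates (K : {set T}) (x y : T) : Prop :=
  forall p : seq T, is_gpath x p y ->
    exists k, (noncollider (x :: p) k && (k \in K)) \/
              [/\ collider (x :: p) k, k \notin K &
                  forall z, z \in K -> ~~ connect E k z].
End DAG.

(* Main.v *)
Require Import Defs.
From Stdlib Require Import Classical.
From mathcomp Require Import all_boot zify.
Set Implicit Arguments. Unset Strict Implicit. Unset Printing Implicit Defensive.

Section Trip.
Variable T : eqType.

Fixpoint trip (s : seq T) : seq (T * T * T) :=
  if s is a :: s' then
    (if s' is b :: s'' then (if s'' is c :: _ then (a, b, c) :: trip s' else [::])
     else [::])
  else [::].

Lemma mem_trip a b c s :
  reflect (exists s1 s2, s = s1 ++ [:: a, b, c & s2]) ((a, b, c) \in trip s).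
Proof.
apply: (iffP idP).
  elim: s => [|x s IH] //=.
  case: s IH => [|y [|z s]] //= IH.
  rewrite in_cons => /orP [/eqP [-> -> ->]|/IH [s1 [s2 ->]]].
    by exists [::], s.
  by exists (x :: s1), s2.
case=> s1 [s2 ->]; elim: s1 => [|x s1 IH] /=; first by rewrite mem_head.
by case: s1 IH => [|y [|z s1]] /= IH; rewrite in_cons IH orbT.
Qed.

Lemma trip_prefix t u w : t \in trip u -> t \in trip (u ++ w).
Proof.
case: t => [[a b] c] /mem_trip [s1 [s2 ->]]; apply/mem_trip.
by exists s1, (s2 ++ w); rewrite -catA.
Qed.

Lemma trip_suffix t u w : t \in trip w -> t \in trip (u ++ w).
Proof.
case: t => [[a b] c] /mem_trip [s1 [s2 ->]]; apply/mem_trip.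
by exists (u ++ s1), s2; rewrite -catA.
Qed.

Lemma mem_trip_cat t u v w :
  (t \in trip (u ++ v :: w)) =
  [|| t \in trip (rcons u v),
      [&& u != [::], w != [::] & t == (last v u, v, head v w)]
    | t \in trip (v :: w)].
Proof.
elim: u => [|a u IH] /=; first by case: w.
case: u IH => [|b u] IH.
  by case: w {IH} => [|c w] //=; rewrite in_cons.
case: u IH => [|c u] IH.
  rewrite /= in_cons IH /=.
  by case: w {IH} => [|d w] //=; rewrite ?in_cons ?orbF.
rewrite [_ ++ _]/= [rcons _ _]/=.
cbv iota; rewrite in_cons IH in_cons /= !orbA.
by [].
Qed.

Lemma trip_rev a b c s : ((a, b, c) \in trip (rev s)) = ((c, b, a) \in trip s).
Proof.
apply/mem_trip/mem_trip => [[s1 [s2 E]]|[s1 [s2 E]]].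
  exists (rev s2), (rev s1).
  by rewrite -(revK s) E rev_cat /= !rev_cons -!cats1 -!catA.
exists (rev s2), (rev s1).
by rewrite E rev_cat /= !rev_cons -!cats1 -!catA.
Qed.

Lemma trip_path (e : rel T) x p a b c :
  path e x p -> (a, b, c) \in trip (x :: p) -> e a b && e b c.
Proof.
move=> P /mem_trip [s1 [s2 Es]].
case: s1 Es => [|y s1] /= [Ex Ep]; subst.
  by move: P => /= /andP [-> /andP [-> _]].
by move: P; rewrite cat_path /= => /andP [_ /andP [_ /andP [-> /andP [-> _]]]].
Qed.

Lemma trip_mid a b c s : (a, b, c) \in trip s -> b \in behead s.
Proof.
move=> /mem_trip [s1 [s2 ->]]; case: s1 => [|y s1] /=; first by rewrite mem_head.
by rewrite mem_cat !in_cons eqxx !orbT.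
Qed.

End Trip.

Section SeqAux.
Variable T : eqType.

Lemma belast_split (c z : T) r1 r2 :
  belast c (r1 ++ z :: r2) = c :: r1 ++ belast z r2.
Proof. by elim: r1 c => [|y r1 IH] c //=; rewrite IH. Qed.

Lemma trip_mid2 (a b c v : T) u : (a, b, c) \in trip (rcons u v) -> b \in u.
Proof.
move=> /mem_trip [s1 [s2 Es]].
have : rcons u v = rcons (s1 ++ [:: a, b & belast c s2]) (last c s2).
  by rewrite Es rcons_cat /= -lastI.
move/rcons_inj => [-> _]; by rewrite mem_cat !in_cons eqxx !orbT.
Qed.

Lemma first_split (P : pred T) l :
  has P l -> exists r1 z r2, [/\ l = r1 ++ z :: r2, P z & ~~ has P r1].
Proof.
elim: l => [|y l IH] //= /orP [Py|/IH [r1 [z [r2 [-> Pz Hr]]]]].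
  by exists [::], y, l.
case Py: (P y).
  by exists [::], y, (r1 ++ z :: r2).
by exists (y :: r1), z, r2; split => //=; rewrite Py.
Qed.

Lemma mem_split (y : T) l : y \in l -> exists l1 l2, l = l1 ++ y :: l2.
Proof. by case/splitPr => l1 l2; exists l1, l2. Qed.

Lemma uniq_insert (u r w : seq T) :
  uniq (u ++ w) -> uniq r -> (forall y, y \in r -> y \notin u ++ w) ->
  uniq (u ++ r ++ w).
Proof.
move=> Uuw Ur Hr.
have P : perm_eq (u ++ r ++ w) (r ++ u ++ w) by rewrite perm_catCA perm_refl.
rewrite (perm_uniq P) cat_uniq Uuw Ur andbT /=.
by apply/hasP => [[y Hy /Hr]]; rewrite Hy.
Qed.

Lemma uniq_del (u m w : seq T) : uniq (u ++ m ++ w) -> uniq (u ++ w).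
Proof.
have P : perm_eq (u ++ m ++ w) (m ++ u ++ w) by rewrite perm_catCA perm_refl.
rewrite (perm_uniq P) cat_uniq => /and3P [_ _ ->] //.
Qed.

Lemma head_rev_cat (d e : T) l m : head d (rev l ++ e :: m) = last e l.
Proof. by case/lastP: l => [|l y] //=; rewrite rev_rcons last_rcons. Qed.

Lemma last_rev (z : T) l : last z (rev l) = head z l.
Proof. by case: l => [|y l] //=; rewrite rev_cons last_rcons. Qed.

Lemma mid_split (s u w : seq T) a b c :
  uniq s -> (a, b, c) \in trip s -> s = u ++ b :: w -> u != [::] /\ w != [::].
Proof.
move=> Us /mem_trip [s1 [s2 Es]] Es'.
have Hb1 : b \notin s1 ++ [:: a].
  move: Us; rewrite Es -cat1s catA cat_uniq => /and3P [_ H _].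
  by apply: contra H => Hb; apply/hasP; exists b => //; rewrite mem_head.
have Hb2 : b \notin u by move: Us; rewrite Es' cat_uniq => /and3P [_ H _];
  apply: contra H => Hb; apply/hasP; exists b => //; rewrite mem_head.
have I1 : index b s = size s1 + 1.
  by rewrite Es -cat1s catA index_cat (negbTE Hb1) /= eqxx size_cat addn0.
have I2 : index b s = size u by rewrite Es' index_cat (negbTE Hb2) /= eqxx addn0.
have S : size s = size s1 + 3 + size s2 by rewrite Es size_cat /= -addnA.
have S' : size s = size u + (size w).+1 by rewrite Es' size_cat.
split; apply/eqP => Hn; subst => /=.
  by move: I1; rewrite I2 /= addn1.
by move: S'; rewrite /= S; lia.
Qed.

End SeqAux.

Ltac orsolve :=
  let H := fresh "Hor" in intro H;
  repeat match goal with Hx : is_true (_ || _) |- _ => case/orP: Hx => Hx end;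
  match goal with Hx : is_true ?a |- _ => by rewrite Hx /= ?orbT end.
Ltac memsolve := rewrite ?(mem_cat, inE, mem_rcons, mem_rev, cat_cons);
  first [orsolve | by rewrite ?eqxx /= ?orbT].

Lemma uniq_catF (T : eqType) (u w : seq T) y : uniq (u ++ w) -> y \in u -> y \in w -> False.
Proof.
rewrite cat_uniq => /and3P [_ H _] Hu Hw; move/hasP: H; apply; by exists y.
Qed.

Lemma sumn_map0 (T : eqType) (l : seq T) f : (forall y, y \in l -> f y = 0) -> sumn (map f l) = 0.
Proof.
elim: l => [|y l IH] //= H; rewrite H ?mem_head // IH //.
by move=> z Hz; apply: H; rewrite inE Hz orbT.
Qed.

Lemma path_head (T : Type) (e : rel T) c r z : path e c r -> e (last c r) z -> e c (head z r).
Proof. by case: r => [|y r] //= /andP []. Qed.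

Section Dag.
Variables (T : finType) (E : rel T) (K : {set T}).
Hypothesis dag : is_dag E.

Lemma no2 a b : E a b -> E b a -> False.
Proof.
move=> ab ba; have := @dag a [:: b; a]; rewrite /= ab ba => /(_ erefl erefl). done.
Qed.

Lemma dag_uniq x p : path E x p -> uniq (x :: p).
Proof.
elim: p x => [|y p IH] x //= /andP [Exy Pp].
have := IH _ Pp => /= /andP [Hy Up]; rewrite Hy Up !andbT.
have Pl : path E x (y :: p) by rewrite /= Exy.
move: Pl; set l := y :: p; apply: contraL => Hx.
case/splitPr: Hx => p1 p2; rewrite cat_path /=; apply/negP => /and3P [P1 E1 _].
have := @dag x (rcons p1 x); rewrite rcons_path P1 E1 last_rcons => /(_ erefl erefl).
by case: p1 {P1 E1}.
Qed.

Lemma sub_adj x p : path E x p -> path (adj E) x p.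
Proof. apply: sub_path => a b; rewrite /adj => ->. done. Qed.

Definition validq b l :=
  [&& path E b l, last b l \in K & all (fun w => w \notin K) (belast b l)].
Definition okt (q : T -> seq T) a b c :=
  if E a b && E c b then validq b (q b) else b \notin K.
Definition good x p q :=
  [/\ path (adj E) x p, uniq (x :: p), x \notin K, last x p \notin K &
      forall a b c, (a, b, c) \in trip (x :: p) -> okt q a b c].
Definition cost x p (q : T -> seq T) := size p + sumn [seq size (q w) | w <- x :: p].

Lemma okt_eq q q' a b c : q' b = q b -> okt q a b c -> okt q' a b c.
Proof. by rewrite /okt => ->. Qed.

Lemma okt_nocol q a b c : E b c -> b \notin K -> okt q a b c.
Proof. by move=> Ebc Kb; rewrite /okt; case: ifP => // /andP [_ H]; case: (no2 Ebc H). Qed.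

Lemma improveB x p q u c v z w r1 r2 :
  good x p q -> x :: p = u ++ c :: v ++ z :: w -> u != [::] -> validq c (q c) ->
  q c = r1 ++ z :: r2 -> (forall y, y \in r1 -> y \notin x :: p) ->
  exists p' q', [/\ good x p' q', last x p' = last x p & cost x p' q' < cost x p q].
Proof.
move=> [Pp Up Kx Ky Hok] Es Hu /and3P [Pq Lq Bq] Eq Hr1.
case: u Es Hu => [|x0 p1] // [Ex Ep] _; subst x0.
rewrite Eq in Pq Lq Bq; rewrite belast_split /= in Bq.
case/andP: Bq => Kc; rewrite all_cat => /andP [/allP Kr1 /= Kr2].
have Uq := dag_uniq Pq.
move: Uq; rewrite /= mem_cat inE cat_uniq /= => /andP [/norP [Hcr1 /norP [Hcz Hcr2]]].
move=> /and4P [Ur1 /norP [Hzr1 _] _ _].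
move: Pq; rewrite cat_path /= => /and3P [Pr1 Elz Pr2].
rewrite last_cat /= in Lq.
have Hs : forall y, y \in r1 -> y \in x :: p -> False.
  by move=> y Hy Hy'; move: (Hr1 y Hy); rewrite Hy'.
set q' := fun b => if b == z then r2 else if (b == c) || (b \in r1) then [::] else q b.
have Hq'eq : forall b, b \in x :: p -> b != c -> b != z -> q' b = q b.
  move=> b Hb Hbc Hbz; rewrite /q' (negbTE Hbz) (negbTE Hbc) /=.
  by case: ifP => // Hbr; case: (Hs _ Hbr Hb).
have Us := Up; rewrite Ep in Us.
have Us2 : uniq ((x :: p1) ++ c :: v ++ z :: w) by [].
have Es3 : x :: p = (x :: p1 ++ c :: v) ++ z :: w by rewrite Ep /= -catA.
have Us3 : uniq ((x :: p1 ++ c :: v) ++ z :: w) by rewrite -Es3.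
exists (p1 ++ c :: r1 ++ z :: w), q'; split.
- split.
  + move: Pp; rewrite Ep cat_path /= => /and3P [P1 A1].
    rewrite cat_path /= => /and3P [_ _ P3].
    rewrite cat_path /= P1 A1 /= cat_path /= sub_adj //= P3 andbT /adj.
    by rewrite Elz.
  + have -> : x :: p1 ++ c :: r1 ++ z :: w = (x :: p1 ++ [:: c]) ++ r1 ++ z :: w.
      by rewrite /= -catA.
    apply: uniq_insert => //.
      apply: (@uniq_del _ _ v); move: Us; by rewrite /= -catA.
    move=> y Hy; apply/negP => Hy'; apply: (Hs _ Hy); rewrite Ep; move: Hy'; memsolve.
  + exact: Kx.
  + by move: Ky; rewrite Ep !(last_cat, last_cons).
  + move=> a b d; rewrite -cat_cons mem_trip_cat => /or3P [H1| /and3P [_ _ /eqP [-> -> ->]] | H3].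
    * have Hb := trip_mid2 H1.
      have Ht : (a, b, d) \in trip (x :: p).
        by rewrite Ep; move: (trip_prefix (v ++ z :: w) H1); rewrite cat_rcons.
      apply: okt_eq (Hok _ _ _ Ht); apply: Hq'eq.
      - by move: Hb; rewrite Ep; memsolve.
      - apply/negP => /eqP Hbc; subst b; apply: (uniq_catF Us2 Hb); by rewrite mem_head.
      - apply/negP => /eqP Hbc; subst b; apply: (uniq_catF Us2 Hb); memsolve.
    * apply: okt_nocol => //.
      have -> : head c (r1 ++ z :: w) = head z r1 by case: (r1).
      exact: path_head.
    * move: H3; rewrite -cat_cons mem_trip_cat => /or3P [H1| /and3P [_ Hw /eqP [-> -> ->]] | H3].
      - have Hb := trip_mid2 H1.
        have Pz : path E c (rcons r1 z) by rewrite rcons_path Pr1 Elz.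
        have /andP [_ Ebd] := trip_path Pz H1.
        apply: okt_nocol => //; move: Hb; rewrite inE => /orP [/eqP -> //|]; exact: Kr1.
      - rewrite /= /okt Elz /=; case: ifP => Hc.
          by rewrite /validq /q' eqxx Pr2 Lq Kr2.
        have Ht : (last z (x :: p1 ++ c :: v), z, head z w) \in trip (x :: p).
          rewrite Es3.
          by rewrite mem_trip_cat Hw eqxx /= orbT.
        by move: (Hok _ _ _ Ht); rewrite /okt Hc andbF.
      - have Hb := trip_mid H3; rewrite /= in Hb.
        have Ht : (a, b, d) \in trip (x :: p).
          rewrite Es3.
          exact: trip_suffix.
        apply: okt_eq (Hok _ _ _ Ht); apply: Hq'eq.
        + by move: Hb; rewrite Ep; memsolve.
        + apply/negP => /eqP Hbc; subst b; apply: (@uniq_catF _ _ _ c Us3).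
            memsolve.
          by rewrite inE Hb orbT.
        + apply/negP => /eqP Hbc; subst b.
          by move: Us3; rewrite cat_uniq /= Hb /= !andbF.
- by rewrite Ep !(last_cat, last_cons).
- rewrite /cost Ep -!cat_cons !map_cat !sumn_cat /= !size_cat /=.
  have E1 : sumn [seq size (q' w0) | w0 <- x :: p1] = sumn [seq size (q w0) | w0 <- x :: p1].
    congr sumn; apply/eq_in_map => y Hy /=; congr size; apply: Hq'eq.
    - by rewrite Ep; move: Hy; memsolve.
    - apply/negP => /eqP Hbc; subst y; apply: (uniq_catF Us2 Hy); by rewrite mem_head.
    - apply/negP => /eqP Hbc; subst y; apply: (uniq_catF Us2 Hy); memsolve.
  have E2 : sumn [seq size (q' w0) | w0 <- w] = sumn [seq size (q w0) | w0 <- w].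
    congr sumn; apply/eq_in_map => y Hy /=; congr size; apply: Hq'eq.
    - by rewrite Ep; move: Hy; memsolve.
    - apply/negP => /eqP Hbc; subst y; apply: (@uniq_catF _ _ _ c Us3).
        memsolve.
      by rewrite inE Hy orbT.
    - apply/negP => /eqP Hbc; subst y.
      by move: Us3; rewrite cat_uniq /= Hy /= !andbF.
  have E3 : sumn [seq size (q' w0) | w0 <- r1] = 0.
    apply: sumn_map0 => y Hy; rewrite /q'; case: eqP => [Hyz|_]; first by subst y; rewrite Hy in Hzr1.
    by rewrite Hy orbT.
  have E4 : q' c = [::] by rewrite /q' (negbTE Hcz) eqxx.
  have E5 : q' z = r2 by rewrite /q' eqxx.
  have E1' := E1; rewrite /= in E1'.
  rewrite E1' E2 E3 E4 E5 Eq !size_cat /=.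
  move: (size (q x)) (size (q z)) (sumn _) (sumn _) (sumn _) => n1 n2 n3 n4 n5.
  move: (size p1) (size r1) (size w) (size v) (size r2) => m1 m2 m3 m4 m5.
  clear; lia.
Qed.


Lemma okt_nocol' q a b c : E b a -> b \notin K -> okt q a b c.
Proof. by move=> Eba Kb; rewrite /okt; case: ifP => // /andP [H _]; case: (no2 Eba H). Qed.

Lemma rev_chain (e : rel T) c r z :
  path e c (rcons r z) -> path (fun a b => e b a) z (rcons (rev r) c).
Proof.
by have := rev_path (fun a b => e b a) c (rcons r z); rewrite last_rcons belast_rcons rev_cons => ->.
Qed.

Lemma improveC x p q u c v c' w r1 z r2 r1' r2' :
  good x p q -> x :: p = u ++ c :: v ++ c' :: w -> u != [::] -> w != [::] ->
  validq c (q c) -> validq c' (q c') -> q c = r1 ++ z :: r2 -> q c' = r1' ++ z :: r2' ->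
  (forall y, y \in r1 ++ z :: r1' -> y \notin x :: p) -> (forall y, y \in r1 -> y \notin r1') ->
  exists p' q', [/\ good x p' q', last x p' = last x p & cost x p' q' < cost x p q].
Proof.
move=> [Pp Up Kx Ky Hok] Es Hu Hw /and3P [Pq Lq Bq] /and3P [Pq' Lq' Bq'] Eq Eq' Hr Hr1.
case: u Es Hu => [|x0 p1] // [Ex Ep] _; subst x0.
rewrite Eq in Pq Lq Bq; rewrite belast_split /= in Bq.
rewrite Eq' in Pq' Lq' Bq'; rewrite belast_split /= in Bq'.
case/andP: Bq => Kc; rewrite all_cat => /andP [/allP Kr1 /= Kr2].
case/andP: Bq' => Kc'; rewrite all_cat => /andP [/allP Kr1' /= _].
have Uq := dag_uniq Pq; have Uq' := dag_uniq Pq'.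
move: Uq; rewrite /= mem_cat inE cat_uniq /= => /andP [/norP [Hcr1 /norP [Hcz _]]].
move=> /and4P [Ur1 /norP [Hzr1 _] _ _].
move: Uq'; rewrite /= mem_cat inE cat_uniq /= => /andP [/norP [Hcr1' /norP [Hcz' _]]].
move=> /and4P [Ur1' /norP [Hzr1' _] _ _].
move: Pq; rewrite cat_path /= => /and3P [Pr1 Elz Pr2].
move: Pq'; rewrite cat_path /= => /and3P [Pr1' Elz' _].
rewrite last_cat /= in Lq.
have Hs : forall y, y \in r1 ++ z :: r1' -> y \in x :: p -> False.
  by move=> y Hy Hy'; move: (Hr y Hy); rewrite Hy'.
have Hzs : z \notin x :: p by apply/negP; apply: Hs; memsolve.
set q' := fun b => if b == z then r2
   else if [|| b == c, b == c', b \in r1 | b \in r1'] then [::] else q b.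
have Hq'eq : forall b, b \in x :: p -> b != c -> b != c' -> q' b = q b.
  move=> b Hb Hbc Hbc'; rewrite /q'.
  have Hbz : b != z by apply: contraNneq Hzs => <-.
  rewrite (negbTE Hbz) (negbTE Hbc) (negbTE Hbc') /=.
  case: ifP => // Hbr; exfalso; apply: (Hs b) Hb; move: Hbr; memsolve.
have Us := Up; rewrite Ep in Us.
have Us2 : uniq ((x :: p1) ++ c :: v ++ c' :: w) by [].
have Es3 : x :: p = (x :: p1 ++ c :: v) ++ c' :: w by rewrite Ep /= -catA.
have Us3 : uniq ((x :: p1 ++ c :: v) ++ c' :: w) by rewrite -Es3.
have Prc : path E c' (rcons r1' z) by rewrite rcons_path Pr1' Elz'.
have Prv := rev_chain Prc.
exists (p1 ++ c :: r1 ++ z :: rev r1' ++ c' :: w), q'; split.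
- split.
  + move: Pp; rewrite Ep cat_path /= => /and3P [P1 A1].
    rewrite cat_path /= => /and3P [_ _ P3].
    rewrite cat_path /= P1 A1 /= cat_path /= sub_adj //= /adj Elz /=.
    rewrite -cat_rcons cat_path last_rcons P3 andbT.
    by apply: sub_path Prv => a b /= ->; rewrite orbT.
  + have -> : x :: p1 ++ c :: r1 ++ z :: rev r1' ++ c' :: w
              = (x :: p1 ++ [:: c]) ++ (r1 ++ z :: rev r1') ++ c' :: w.
      by rewrite /= -!catA.
    apply: uniq_insert => //.
    * apply: (@uniq_del _ _ v); move: Us; by rewrite /= -catA.
    * rewrite cat_uniq Ur1 /= mem_rev Hzr1' rev_uniq Ur1' /= andbT.
      apply/norP; split => //; apply/hasP => [[y]]; rewrite mem_rev => Hy1 Hy2.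
      by move: (Hr1 _ Hy2); rewrite Hy1.
    * move=> y Hy; apply/negP => Hy'; apply: (Hs y).
        by move: Hy; memsolve.
      by rewrite Ep; move: Hy'; memsolve.
  + exact: Kx.
  + by move: Ky; rewrite Ep !(last_cat, last_cons).
  + move=> a b d; rewrite -cat_cons mem_trip_cat => /or3P [H1| /and3P [_ _ /eqP [-> -> ->]] | H3].
    * have Hb := trip_mid2 H1.
      have Ht : (a, b, d) \in trip (x :: p).
        by rewrite Ep; move: (trip_prefix (v ++ c' :: w) H1); rewrite cat_rcons.
      apply: okt_eq (Hok _ _ _ Ht); apply: Hq'eq.
      - by move: Hb; rewrite Ep; memsolve.
      - apply/negP => /eqP Hbc; subst b; apply: (uniq_catF Us2 Hb); by rewrite mem_head.
      - apply/negP => /eqP Hbc; subst b; apply: (uniq_catF Us2 Hb); memsolve.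
    * apply: okt_nocol => //.
      have -> : head c (r1 ++ z :: rev r1' ++ c' :: w) = head z r1 by case: (r1).
      exact: path_head.
    * move: H3; rewrite -(cat_cons c r1) mem_trip_cat => /or3P [H1| /and3P [_ _ /eqP [-> -> ->]] | H3].
      - have Hb := trip_mid2 H1.
        have Pz : path E c (rcons r1 z) by rewrite rcons_path Pr1 Elz.
        have /andP [_ Ebd] := trip_path Pz H1.
        apply: okt_nocol => //; move: Hb; rewrite inE => /orP [/eqP -> //|]; exact: Kr1.
      - rewrite head_rev_cat /= /okt Elz Elz' /=.
        by rewrite /validq /q' eqxx Pr2 Lq Kr2.
      - move: H3; rewrite -(cat_cons z (rev r1')) mem_trip_cat => /or3P [H1| /and3P [_ _ /eqP [-> -> ->]] | H3].
        + have Ht : (d, b, a) \in trip (rcons (c' :: r1') z).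
            rewrite -trip_rev.
            have -> : rev (rcons (c' :: r1') z) = rcons (z :: rev r1') c' by rewrite rev_rcons rev_cons.
            exact: H1.
          have Hb := trip_mid2 Ht.
          have /andP [_ Eba] := trip_path Prc Ht.
          apply: okt_nocol' => //; move: Hb; rewrite inE => /orP [/eqP -> //|]; exact: Kr1'.
        + apply: okt_nocol' => //.
          rewrite /= last_rev; exact: path_head.
        + have Hb := trip_mid H3; rewrite /= in Hb.
          have Ht : (a, b, d) \in trip (x :: p) by rewrite Es3; exact: trip_suffix.
          apply: okt_eq (Hok _ _ _ Ht); apply: Hq'eq.
          ** by move: Hb; rewrite Ep; memsolve.
          ** apply/negP => /eqP Hbc; subst b; apply: (@uniq_catF _ _ _ c Us3).
               memsolve.
             by rewrite inE Hb orbT.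
          ** apply/negP => /eqP Hbc; subst b.
             by move: Us3; rewrite cat_uniq /= Hb /= !andbF.
- by rewrite Ep !(last_cat, last_cons).
- rewrite /cost Ep -!cat_cons !map_cat !sumn_cat /=.
  have E1 : sumn [seq size (q' w0) | w0 <- x :: p1] = sumn [seq size (q w0) | w0 <- x :: p1].
    congr sumn; apply/eq_in_map => y Hy /=; congr size; apply: Hq'eq.
    - by rewrite Ep; move: Hy; memsolve.
    - apply/negP => /eqP Hbc; subst y; apply: (uniq_catF Us2 Hy); by rewrite mem_head.
    - apply/negP => /eqP Hbc; subst y; apply: (uniq_catF Us2 Hy); memsolve.
  have E2 : sumn [seq size (q' w0) | w0 <- w] = sumn [seq size (q w0) | w0 <- w].
    congr sumn; apply/eq_in_map => y Hy /=; congr size; apply: Hq'eq.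
    - by rewrite Ep; move: Hy; memsolve.
    - apply/negP => /eqP Hbc; subst y; apply: (@uniq_catF _ _ _ c Us3).
        memsolve.
      by rewrite inE Hy orbT.
    - apply/negP => /eqP Hbc; subst y.
      by move: Us3; rewrite cat_uniq /= Hy /= !andbF.
  have E3 : sumn [seq size (q' w0) | w0 <- r1] = 0.
    apply: sumn_map0 => y Hy; rewrite /q'; case: eqP => [Hyz|_]; first by subst y; rewrite Hy in Hzr1.
    by rewrite Hy !orbT.
  have E3' : sumn [seq size (q' w0) | w0 <- rev r1'] = 0.
    apply: sumn_map0 => y; rewrite mem_rev => Hy; rewrite /q'; case: eqP => [Hyz|_].
      by subst y; rewrite Hy in Hzr1'.
    by rewrite Hy !orbT.
  have E4 : q' c = [::] by rewrite /q' (negbTE Hcz) eqxx.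
  have E4' : q' c' = [::] by rewrite /q' (negbTE Hcz') eqxx orbT.
  have E5 : q' z = r2 by rewrite /q' eqxx.
  have E1' := E1; rewrite /= in E1'.
  rewrite E1' E2 E3 E3' E4 E4' E5 Eq Eq' !size_cat /= ?size_rev.
  rewrite !size_cat /= !size_cat /= size_rev.
  move: (size (q x)) (sumn _) (sumn _) (sumn _) => n1 n2 n3 n4.
  move: (size p1) (size r1) (size w) (size v) (size r2) (size r1') (size r2') => m1 m2 m3 m4 m5 m6 m7.
  clear; lia.
Qed.


Lemma rev_last (x : T) p : last x p :: rev (belast x p) = rev (x :: p).
Proof. by rewrite [in RHS]lastI rev_rcons. Qed.

Lemma last_revb (x : T) p : last (last x p) (rev (belast x p)) = x.
Proof. by case: p => [|y p] //=; rewrite rev_cons last_rcons. Qed.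

Lemma good_rev x p q : good x p q -> good (last x p) (rev (belast x p)) q.
Proof.
move=> [Pp Up Kx Ky Hok]; split.
- by rewrite rev_path; apply: sub_path Pp => a b; rewrite /adj orbC.
- by rewrite rev_last rev_uniq.
- exact: Ky.
- by rewrite last_revb.
- move=> a b c; rewrite rev_last trip_rev => /Hok; by rewrite /okt andbC.
Qed.

Lemma cost_rev x p q : cost (last x p) (rev (belast x p)) q = cost x p q.
Proof. by rewrite /cost rev_last map_rev sumn_rev size_rev size_belast. Qed.

Definition colm (s : seq T) c := exists a b, (a, c, b) \in trip s /\ E a c /\ E b c.

Definition perfect (s : seq T) (q : T -> seq T) :=
  (forall c, colm s c -> forall z, z \in q c -> z \notin s) /\
  (forall c c', colm s c -> colm s c' -> c != c' ->
     forall z, z \in c :: q c -> z \notin c' :: q c').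

Definition better x p q :=
  exists p' q', [/\ good x p' q', last x p' = last x p & cost x p' q' < cost x p q].

Lemma colm_valid x p q c : good x p q -> colm (x :: p) c ->
  validq c (q c) /\ exists s1 a b s2, x :: p = s1 ++ [:: a, c, b & s2] /\ (a, c, b) \in trip (x :: p).
Proof.
move=> [_ _ _ _ Hok] [a [b [Ht [Eac Ebc]]]]; split.
  by move: (Hok _ _ _ Ht); rewrite /okt Eac Ebc.
by case/mem_trip: (Ht) => s1 [s2 Es]; exists s1, a, b, s2.
Qed.

Lemma colm_mem s c : colm s c -> c \in s.
Proof. move=> [a [b [/trip_mid H _]]]; case: s H => //= y s H; by rewrite inE H orbT. Qed.

Lemma stepC x p q u c v c' w :
  good x p q -> colm (x :: p) c -> colm (x :: p) c' ->
  x :: p = u ++ c :: v ++ c' :: w -> u != [::] -> w != [::] ->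
  (forall c, colm (x :: p) c -> forall z, z \in q c -> z \notin x :: p) ->
  has (mem (q c')) (q c) -> better x p q.
Proof.
move=> Hg Hc Hc' Es Hu Hw Hiii Hh.
have [Vc _] := colm_valid Hg Hc; have [Vc' _] := colm_valid Hg Hc'.
case: (first_split Hh) => r1 [z [r2 [Eq Hz Hr1]]].
case/mem_split: Hz => r1' [r2' Eq'].
apply: (improveC Hg Es Hu Hw Vc Vc' Eq Eq').
- move=> y; rewrite mem_cat inE => /or3P [Hy|/eqP ->|Hy].
  + by apply: (Hiii _ Hc); rewrite Eq mem_cat Hy.
  + by apply: (Hiii _ Hc); rewrite Eq mem_cat mem_head orbT.
  + by apply: (Hiii _ Hc'); rewrite Eq' mem_cat Hy.
- move=> y Hy; apply/negP => Hy'; move/hasP: Hr1; apply; exists y => //.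
  rewrite Eq'; change (y \in r1' ++ z :: r2'); by rewrite mem_cat Hy'.
Qed.

Lemma step x p q : good x p q -> perfect (x :: p) q \/ better x p q.
Proof.
move=> Hg.
case: (classic (perfect (x :: p) q)) => [Hp|Hnp]; [by left | right].
have Up : uniq (x :: p) by case: Hg.
case: (classic (forall c, colm (x :: p) c -> forall z, z \in q c -> z \notin x :: p)) => Hiii.
- have [c [c' [Hc [Hc' [Hne Hz]]]]] : exists c c', colm (x :: p) c /\ colm (x :: p) c' /\
        c != c' /\ has (mem (c' :: q c')) (c :: q c).
    apply: NNPP => H; apply: Hnp; split => // c c' Hc Hc' Hne z Hz1.
    apply/negP => Hz2; apply: H; exists c, c'; do 3! split => //.
    by apply/hasP; exists z.
  have Hh : has (mem (q c')) (q c).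
    case/hasP: Hz => z; rewrite !inE => /orP [/eqP ->|Hz1] /orP [Hz2|Hz2].
    + by rewrite Hz2 in Hne.
    + by move: (Hiii _ Hc' _ Hz2); rewrite (colm_mem Hc).
    + by move: (Hiii _ Hc _ Hz1); rewrite (eqP Hz2) (colm_mem Hc').
    + by apply/hasP; exists z.
  have [_ [s1 [a [b [s2 [Es Ht]]]]]] := colm_valid Hg Hc.
  have Hc's : c' \in x :: p := colm_mem Hc'.
  have [a' [b' [Ht' _]]] := Hc'.
  move: Hc's; rewrite Es -cat_rcons mem_cat => /orP [Hin|Hin].
  + case/mem_split: Hin => u [v Es1].
    have Es' : x :: p = u ++ c' :: v ++ c :: b :: s2 by rewrite Es -cat_rcons Es1 -catA.
    have [Hu _] := mid_split Up Ht' Es'.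
    apply: (stepC Hg Hc' Hc Es' Hu) => //; by rewrite has_sym.
  + have Hin' : c' \in b :: s2.
      move: Hin; rewrite inE => /orP [/eqP Hcc|] //; by rewrite Hcc eqxx in Hne.
    case/mem_split: Hin' => v [w Es1].
    have Es' : x :: p = rcons s1 a ++ c :: v ++ c' :: w by rewrite Es -Es1 cat_rcons.
    have Es'' : x :: p = (rcons s1 a ++ c :: v) ++ c' :: w by rewrite Es' -catA.
    have [_ Hw] := mid_split Up Ht' Es''.
    apply: (stepC Hg Hc Hc' Es' _ Hw) => //; by case: (s1).
- have [c [Hc Hh]] : exists c, colm (x :: p) c /\ has (mem (x :: p)) (q c).
    apply: NNPP => H; apply: Hiii => c Hc z Hz; apply/negP => Hzs; apply: H.
    by exists c; split => //; apply/hasP; exists z.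
  have [Vc [s1 [a [b [s2 [Es Ht]]]]]] := colm_valid Hg Hc.
  case: (first_split Hh) => r1 [z [r2 [Eq Hz Hr1]]].
  have Hr1' : forall y, y \in r1 -> y \notin x :: p.
    by move=> y Hy; apply/negP => Hy'; move/hasP: Hr1; apply; exists y.
  have Hzc : z != c.
    apply/negP => /eqP Hzc; subst z; case/and3P: Vc => Pc _ _.
    have Hin : c \in r1 ++ c :: r2 by rewrite mem_cat mem_head orbT.
    by move: (dag_uniq Pc); rewrite /= Eq Hin.
  have Hz' : z \in x :: p := Hz.
  move: Hz'; rewrite Es -cat_rcons mem_cat => /orP [Hin|Hin].
  + case/mem_split: Hin => u [v Es1].
    have Es' : x :: p = u ++ z :: v ++ c :: b :: s2 by rewrite Es -cat_rcons Es1 -catA.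
    have Hg' := good_rev Hg.
    have Er : last x p :: rev (belast x p) = rev (b :: s2) ++ c :: rev v ++ z :: rev u.
      by rewrite rev_last Es' !(rev_cat, rev_cons) -!cats1 -!catA.
    have Hne : rev (b :: s2) != [::] by rewrite rev_cons; case: (rev s2).
    have Hr1r : forall y, y \in r1 -> y \notin last x p :: rev (belast x p).
      by move=> y Hy; rewrite rev_last mem_rev; apply: Hr1'.
    have [p'' [q'' [Hg'' Hl'' Hc'']]] := improveB Hg' Er Hne Vc Eq Hr1r.
    rewrite last_revb in Hl''.
    exists (rev (belast (last x p) p'')), q''; split.
    * by move: (good_rev Hg''); rewrite Hl''.
    * by rewrite -{1}Hl'' last_revb.
    * have C1 := cost_rev (last x p) p'' q''; rewrite Hl'' in C1.
      by rewrite C1 -(cost_rev x p q).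
  + have Hin' : z \in b :: s2.
      move: Hin; rewrite inE => /orP [/eqP Hcc|] //; by rewrite Hcc eqxx in Hzc.
    case/mem_split: Hin' => v [w Es1].
    have Es' : x :: p = rcons s1 a ++ c :: v ++ z :: w by rewrite Es -Es1 cat_rcons.
    apply: (improveB Hg Es' _ Vc Eq Hr1'); by case: (s1).
Qed.

Lemma main n x p q : good x p q -> cost x p q <= n ->
  exists p' q', [/\ good x p' q', last x p' = last x p & perfect (x :: p') q'].
Proof.
elim: n x p q => [|n IH] x p q Hg Hc; case: (step Hg) => [Hp|[p' [q' [Hg' Hl Hc']]]].
- by exists p, q.
- by move: Hc'; rewrite leqn0 in Hc; rewrite (eqP Hc).
- by exists p, q.
- have [p'' [q'' [G L P]]] := IH x p' q' Hg' (leq_trans Hc' Hc).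
  by exists p'', q''; rewrite L Hl.
Qed.

End Dag.

Section Final.
Variables (T : finType) (E : rel T) (K : {set T}).

Lemma trip_nth d (s : seq T) i : 0 < i -> i.+1 < size s ->
  (nth d s i.-1, nth d s i, nth d s i.+1) \in trip s.
Proof.
elim: s i => [|a s IH] [|[|j]] //=.
  by move=> _; case: s {IH} => [|b [|c s]] //= _; rewrite mem_head.
move=> _ H; exact: (@trip_suffix _ _ [:: a] _ (IH j.+1 erefl H)).
Qed.

Lemma idx_trip (s s1 s2 : seq T) a b c :
  uniq s -> s = s1 ++ [:: a, b, c & s2] -> index b s = (size s1).+1.
Proof.
move=> Us Es.
have Hb1 : b \notin s1 ++ [:: a].
  move: Us; rewrite Es -cat1s catA cat_uniq => /and3P [_ H _].
  by apply: contra H => Hb; apply/hasP; exists b => //; rewrite mem_head.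
by rewrite Es -cat1s catA index_cat (negbTE Hb1) /= eqxx size_cat addn0 addn1.
Qed.

Lemma trip_uniq_mid (s : seq T) a b c a' c' :
  uniq s -> (a, b, c) \in trip s -> (a', b, c') \in trip s -> a = a' /\ c = c'.
Proof.
move=> Us /mem_trip [s1 [s2 E1]] /mem_trip [t1 [t2 E2]].
have := idx_trip Us E1; rewrite (idx_trip Us E2) => [[Hsz]].
have := congr1 (drop (size s1)) E1; rewrite drop_size_cat //.
have := congr1 (drop (size t1)) E2; rewrite drop_size_cat // -Hsz => -> [-> ->].
done.
Qed.

Lemma trip_collider (s : seq T) a k b :
  (a, k, b) \in trip s -> E a k -> E b k -> collider E s k.
Proof.
move=> /mem_trip [s1 [s2 Es]] Eak Ebk; apply/existsP.
have Hi : (size s1).+1 < size s by rewrite Es size_cat /=; lia.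
exists (Ordinal Hi); rewrite /= Es !nth_cat.
have -> : (size s1).+1 < size s1 = false by apply/negbTE; rewrite -leqNgt; lia.
have -> : (size s1).+2 < size s1 = false by apply/negbTE; rewrite -leqNgt; lia.
rewrite ltnn subnn subSn // subnn subSn // subSn // subnn /= eqxx Eak Ebk.
by rewrite size_cat /=; apply/andP; split; lia.
Qed.

Lemma collider_trip (s : seq T) k : collider E s k -> colm E s k.
Proof.
move/existsP => [i /and5P [H0 H1 /eqP Hk E1 E2]].
have := trip_nth k H0 H1; rewrite Hk => Ht.
by exists (nth k s i.-1), (nth k s i.+1).
Qed.

Lemma mid_exists x p (k : T) : k \in x :: p -> k != x -> k != last x p ->
  exists a c, (a, k, c) \in trip (x :: p).
Proof.
move=> /mem_split [l1 [l2 Es]] Hx Hl.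
have Hl1 : l1 != [::] by apply: contraNneq Hx => H; move: Es; rewrite H => [[->]].
have Hl2 : l2 != [::].
  apply: contraNneq Hl => H; move: Es; rewrite H => Es.
  have : last x (x :: p) = last x (l1 ++ [:: k]) by rewrite Es.
  by rewrite /= cats1 last_rcons => ->.
exists (last k l1), (head k l2); rewrite Es mem_trip_cat Hl1 Hl2 eqxx /=.
by rewrite orbT.
Qed.

Lemma cut_valid (l : seq T) b : path E b l -> last b l \in K -> exists l', validq E K b l'.
Proof.
elim: l b => [|d l IH] b /=.
  by move=> _ Hb; exists [::]; rewrite /validq /= Hb.
move=> /andP [Ebd Pl] Hl.
case Hb: (b \in K).
  by exists [::]; rewrite /validq /= Hb.
case: (IH d Pl Hl) => l' /and3P [P1 L1 B1].
by exists (d :: l'); rewrite /validq /= Ebd P1 L1 Hb.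
Qed.

End Final.

Theorem lemma6p2 (T : finType) (E : rel T) (x y : T) (K : {set T}) :
  is_dag E -> ~ d_separates E K x y ->
  exists p : seq T,
    [/\ is_gpath E x p y,
        (* (i) *)
        (forall k, noncollider E (x :: p) k -> k \notin K) &
        exists q : T -> seq T,
          (* (ii) and (iii): for each collider c, c :: q c is a directed path
             from c to a node of K, meeting x :: p only at c *)
          (forall c, collider E (x :: p) c ->
             [/\ is_dpath E c (q c), last c (q c) \in K &
                 forall z, z \in q c -> z \notin x :: p]) /\
          (* (iv) pairwise node-disjoint *)
          (forall c c', collider E (x :: p) c -> collider E (x :: p) c' -> c != c' ->
             forall z, z \in c :: q c -> z \notin c' :: q c')].
Proof.
move=> dag Hnd.
have [p0 [Hg0 Hall]] : exists p0, is_gpath E x p0 y /\ forall k,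
    ~ (noncollider E (x :: p0) k && (k \in K)) /\
    ~ [/\ collider E (x :: p0) k, k \notin K & forall z, z \in K -> ~~ connect E k z].
  apply: NNPP => H; apply: Hnd => p0 Hp0; apply: NNPP => H2; apply: H.
  exists p0; split => // k; split => HH; apply: H2; exists k; [left|right] => //.
case/and3P: Hg0 => Pp0 Up0 /eqP Ly0.
have Hnc : forall k, noncollider E (x :: p0) k -> k \notin K.
  move=> k Hk; apply/negP => HK; case: (Hall k) => H _; apply: H; by rewrite Hk HK.
have Hcol : forall k, collider E (x :: p0) k -> [exists z in K, connect E k z].
  move=> k Hk; case Hex: [exists z in K, connect E k z] => //; exfalso.
  case: (Hall k) => _ H; apply: H; split => //.
    apply/negP => HK; suff : [exists z in K, connect E k z] by rewrite Hex.
    by apply/existsP; exists k; rewrite HK connect0.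
  move=> z Hz; apply/negP => Hc; suff : [exists z in K, connect E k z] by rewrite Hex.
  by apply/existsP; exists z; rewrite Hz Hc.
have exq : forall b, exists l, [exists z in K, connect E b z] ==> validq E K b l.
  move=> b; case Hb: [exists z in K, connect E b z]; last by exists [::].
  case/existsP: Hb => z /andP [Hz /connectP [l Pl Lz]].
  have Hl : last b l \in K by rewrite -Lz.
  by case: (cut_valid Pl Hl) => l' Hl'; exists l'.
pose q0 b := xchoose (exq b).
have Hq0 : forall b, [exists z in K, connect E b z] -> validq E K b (q0 b).
  by move=> b Hb; have /implyP := xchooseP (exq b); apply.
have Hx : x \notin K.
  apply: Hnc; rewrite /noncollider mem_head /=; apply/negP => /collider_trip [a [b [Ht _]]].
  by move: (trip_mid Ht) Up0 => /= ->.
have Hy : last x p0 \notin K.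
  apply: Hnc; rewrite /noncollider mem_last /=; apply/negP => /collider_trip [a [b [Ht _]]].
  move: Ht Up0; rewrite lastI => /trip_mid2 H; by rewrite rcons_uniq H.
have G0 : good E K x p0 q0.
  split => // a b c Ht; rewrite /okt; case: ifP => [/andP [Eab Ecb]|Hnot].
    by apply: Hq0; apply: Hcol; apply: (trip_collider Ht).
  apply: Hnc; rewrite /noncollider.
  have -> : b \in x :: p0 by move: (trip_mid Ht) => /= H; rewrite inE H orbT.
  apply/negP => /collider_trip [a' [c' [Ht' [Ea Ec]]]].
  case: (trip_uniq_mid Up0 Ht Ht') => Ha Hc; subst a' c'.
  by rewrite Ea Ec in Hnot.
have [p [q [Gp Lp [Hiii Hiv]]]] := main dag G0 (leqnn _).
have [Pp Up Kx Ky Hok] := Gp.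
exists p; split.
- by rewrite /is_gpath Pp Up Lp Ly0 eqxx.
- move=> k /andP [Hk Hnk].
  case: (eqVneq k x) => [->|Hkx] //.
  case: (eqVneq k (last x p)) => [->|Hkl] //.
  have [a [c Ht]] := mid_exists Hk Hkx Hkl.
  move: (Hok _ _ _ Ht); rewrite /okt; case: ifP => // /andP [Eak Eck].
  by move: Hnk; rewrite (trip_collider Ht Eak Eck).
- exists q; split.
  + move=> c Hc; have Hc' := collider_trip Hc.
    have [/and3P [Pq Lq _] _] := colm_valid Gp Hc'.
    split => //; first by rewrite /is_dpath Pq (dag_uniq dag Pq).
    exact: Hiii.
  + move=> c c' Hc Hc' Hne; apply: Hiv => //; exact: collider_trip.
Qed.
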